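(* Let $M$ be a unique expansion matroid on a finite set $E$ with $r(M)>0$, and let $B\subseteq E$. Then $B\in\mathcal{B}(M)$ if and only if $B\subseteq\cup\mathcal{B}(M)$ and $|B\cap D|=1$ for every $D\in F(M)$.
   Context: For a matroid $M$: $\mathcal{I}(M)$ its independent sets, $\mathcal{B}(M)$ its bases, $\cup\mathcal{B}(M)$ the union of all bases, $r(M)$ the size of a base, $r(X)$ the rank of $X\subseteq E$. $s(M)=\{A\in\mathcal{I}(M): |A|=r(M)-1\}$; $K_M(X)=\{a\in E: r(X\cup\{a\})=r(X)+1\}$; $F(M)=\{K_M(X): X\in s(M)\}$. $M$ is a unique expansion matroid if for every $B\in\mathcal{B}(M)$ and every $A\in s(M)$, whenever $e_1,e_2\in B$ satisfy $A\cup\{e_1\}\in\mathcal{B}(M)$ and $A\cup\{e_2\}\in\mathcal{B}(M)$, then $e_1=e_2$. *)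

(* Defs.v *)
From mathcomp Require Import all_boot.
Set Implicit Arguments. Unset Strict Implicit. Unset Printing Implicit Defensive.

(* A matroid on the finite ground set E = the finType T, given by its
   family of independent sets (axioms I1-I3). *)
Definition is_matroid (T : finType) (I : {set {set T}}) : Prop :=
  [/\ set0 \in I,
      (forall A B : {set T}, B \in I -> A \subset B -> A \in I) &
      (forall A B : {set T}, A \in I -> B \in I -> #|A| < #|B| ->
         exists2 e, e \in B :\: A & e |: A \in I)].

Section Matroid.
Variables (T : finType) (I : {set {set T}}).

Definition mrank (X : {set T}) : nat :=
  \max_(A in I | A \subset X) #|A|.

Definition rankM : nat := mrank setT.

Definition bases : {set {set T}} :=
  [set B in I | [forall A in I, (B \subset A) ==> (A == B)]].

Definition union_bases : {set T} := \bigcup_(B in bases) B.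

Definition sM : {set {set T}} := [set A in I | #|A| == rankM - 1].

Definition KM (X : {set T}) : {set T} :=
  [set a | mrank (a |: X) == (mrank X).+1].

Definition FM : {set {set T}} := [set KM X | X in sM].

Definition unique_expansion : Prop :=
  forall B A : {set T}, B \in bases -> A \in sM ->
  forall e1 e2 : T, e1 \in B -> e2 \in B ->
    e1 |: A \in bases -> e2 |: A \in bases -> e1 = e2.

End Matroid.

(* Main.v *)
Require Import Defs.
From mathcomp Require Import all_boot.
From mathcomp Require Import zify.
Set Implicit Arguments. Unset Strict Implicit.

Section Helpers.
Variables (T : finType) (I : {set {set T}}).
Hypothesis HM : is_matroid I.

Lemma I0 : set0 \in I. Proof. by case: HM. Qed.
Lemma Isub (A B : {set T}) : B \in I -> A \subset B -> A \in I. Proof. by case: HM => _ H _; apply: H. Qed.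
Lemma Iaug (A B : {set T}) : A \in I -> B \in I -> #|A| < #|B| ->
         exists2 e, e \in B :\: A & e |: A \in I.
Proof. by case: HM => _ _ H; apply: H. Qed.

Lemma mrank_le (Y : {set T}) : mrank I Y <= #|Y|.
Proof. apply/bigmax_leqP => A /andP[_ HA]; exact: subset_leq_card. Qed.

Lemma mrank_I (Y : {set T}) : Y \in I -> mrank I Y = #|Y|.
Proof.
move=> HY; apply/eqP; rewrite eqn_leq mrank_le /=.
by apply: (@leq_bigmax_cond _ (fun A => (A \in I) && (A \subset Y)) (fun A => #|A|) Y); rewrite HY subxx.
Qed.

Lemma mrank_wit (Y : {set T}) : exists2 A, (A \in I) && (A \subset Y) & mrank I Y = #|A|.
Proof.
have H : 0 < #|[pred A : {set T} | (A \in I) && (A \subset Y)]|.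
  apply/card_gt0P; exists set0; by rewrite inE I0 sub0set.
case: (eq_bigmax_cond (fun A : {set T} => #|A|) H) => A HA HE.
by exists A => //; rewrite /mrank HE.
Qed.

Lemma mrank_max (Y A : {set T}) : A \in I -> A \subset Y -> #|A| <= mrank I Y.
Proof.
move=> HA HY.
by apply: (@leq_bigmax_cond _ (fun A => (A \in I) && (A \subset Y)) (fun A => #|A|) A); rewrite HA HY.
Qed.

Lemma mrank_eq_I (Y : {set T}) : mrank I Y = #|Y| -> Y \in I.
Proof.
case: (mrank_wit Y) => A /andP[HA HAY] -> HE.
have : A == Y by rewrite eqEcard HAY HE leqnn.
by move/eqP <-.
Qed.

Lemma I_le_rank (A : {set T}) : A \in I -> #|A| <= rankM I.
Proof. move=> HA; apply: mrank_max => //; exact: subsetT. Qed.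

Lemma rank_wit : exists2 A, A \in I & #|A| = rankM I.
Proof. case: (mrank_wit setT) => A /andP[HA _] HE; by exists A. Qed.

Lemma basesP (B : {set T}) : B \in bases I <-> B \in I /\ #|B| = rankM I.
Proof.
split.
- rewrite inE => /andP[HB /forall_inP Hmax]; split => //.
  apply/eqP; rewrite eqn_leq I_le_rank //=.
  rewrite leqNgt; apply/negP => Hlt.
  case: rank_wit => A0 HA0 HA0c.
  case: (Iaug HB HA0 (leq_trans Hlt (eq_leq (esym HA0c)))) => e.
  rewrite inE => /andP[HeB _] HeI.
  have := Hmax _ HeI; rewrite subsetUr /= => /eqP HE.
  by move: HeB; rewrite -HE setU11.
- case=> HB Hc; rewrite inE HB /=; apply/forall_inP => A HA; apply/implyP => HBA.
  by rewrite eq_sym eqEcard HBA Hc I_le_rank.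
Qed.

Lemma extend (A C : {set T}) : A \in I -> C \in I -> #|A| <= #|C| ->
  exists Z, [/\ Z \in I, A \subset Z, Z \subset A :|: C & #|Z| = #|C|].
Proof.
move=> HA HC; move Hk : (#|C| - #|A|) => k.
elim: k A HA Hk => [|k IH] A HA Hk Hle.
  exists A; split => //; [exact: subsetUl| (timeout 20 lia)].
case: (Iaug HA HC (ltac:(timeout 20 lia) : #|A| < #|C|)) => e.
rewrite inE => /andP[HeA HeC] HeI.
have Hc : #|e |: A| = #|A|.+1 by rewrite cardsU1 HeA.
case: (IH _ HeI ltac:(timeout 20 lia) ltac:((timeout 20 lia))) => Z [HZ HAZ HZC HZc].
exists Z; split => //.
- apply: subset_trans HAZ; exact: subsetUr.
- apply: (subset_trans HZC); apply/subsetP => x; rewrite !inE.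
  case/orP => [/orP[/eqP -> | H] | H]; by rewrite ?HeC ?H ?orbT.
Qed.

Hypothesis Hr : 0 < rankM I.

Lemma KMP (X : {set T}) (a : T) : X \in sM I -> (a \in KM I X <-> a |: X \in bases I).
Proof.
rewrite inE => /andP[HX /eqP HXc].
rewrite inE (mrank_I HX) basesP; split.
- move=> /eqP Hm.
  have Ha : a \notin X.
    apply/negP => Ha; move: Hm; rewrite (setUidPr _); last by rewrite sub1set.
    rewrite mrank_I //; (timeout 20 lia).
  have Hc : #|a |: X| = #|X|.+1 by rewrite cardsU1 Ha.
  have HI : a |: X \in I by apply: mrank_eq_I; (timeout 20 lia).
  split => //; (timeout 20 lia).
- case=> HI Hc; rewrite mrank_I //; apply/eqP; (timeout 20 lia).
Qed.

End Helpers.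

Theorem proposition7 (T : finType) (I : {set {set T}}) (B : {set T}) :
  is_matroid I -> unique_expansion I -> 0 < rankM I ->
  (B \in bases I <->
   (B \subset union_bases I /\ forall D, D \in FM I -> #|B :&: D| = 1)).
Proof.
move=> HM HU Hr; split.
- move=> HB; split.
    by apply: (bigcup_sup B (P := fun B => B \in bases I)).
  move=> D /imsetP [X HX ->].
  have [HBI HBc] := (basesP HM B).1 HB.
  have HX' := HX; rewrite inE in HX'; case/andP: HX' => HXI /eqP HXc.
  case: (Iaug HM HXI HBI ltac:(timeout 20 lia)) => e.
  rewrite inE => /andP[HeX HeB] HeI.
  have Heb : e |: X \in bases I.
    apply/(basesP HM); split => //; rewrite cardsU1 HeX; (timeout 20 lia).
  apply/eqP/cards1P; exists e; apply/setP => x; rewrite in_setI in_set1.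
  apply/andP/eqP.
  + case=> HxB /(KMP HM Hr x HX) Hxb; exact: (HU _ _ HB HX _ _ HxB HeB Hxb Heb).
  + move=> ->; split => //; exact/(KMP HM Hr e HX).
- case=> HBu HD.
  have HK : forall X, X \in sM I -> exists2 b, b \in B & (b |: X \in bases I).
    move=> X HX; have : #|B :&: KM I X| = 1 by apply: HD; apply/imsetP; exists X.
    move/eqP/cards1P => [b Hb].
    have : b \in B :&: KM I X by rewrite Hb set11.
    rewrite in_setI => /andP[HbB HbK]; exists b => //; exact/(KMP HM Hr b HX).
  case: (mrank_wit HM B) => J /andP[HJI HJB] HJc.
  have HJbase : J \in bases I.
    apply/(basesP HM); split => //; apply/eqP; rewrite eqn_leq (I_le_rank HJI) /=.
    rewrite leqNgt; apply/negP => Hlt.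
    case: (rank_wit HM) => B0 HB0 HB0c.
    case: (extend HM HJI HB0 ltac:(timeout 20 lia)) => Z [HZI HJZ _ HZc].
    have : 0 < #|Z :\: J|.
      rewrite cardsD; have := subset_leq_card (subsetIr Z J); (timeout 20 lia).
    case/card_gt0P => f; rewrite inE => /andP[HfJ HfZ].
    have HAs : Z :\ f \in sM I.
      rewrite inE (Isub HM HZI (subD1set Z f)) /=.
      apply/eqP; have := cardsD1 f Z; rewrite HfZ; (timeout 20 lia).
    case: (HK _ HAs) => b HbB /(basesP HM) [Hbi Hbc].
    case Hba: (b \in Z :\ f).
      move: Hbc; rewrite cardsU1 Hba /=; have := cardsD1 f Z; rewrite HfZ /= => H1 H2; clear -H1 H2 HZc HB0c; timeout 20 lia.
    have HbJ : b \notin J.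
      apply/negP => HbJ; move: Hba; rewrite in_setD1 (subsetP HJZ _ HbJ) andbT.
      by move=> /negbFE/eqP Hbf; move: HfJ; rewrite -Hbf HbJ.
    have HbJI : b |: J \in I.
      apply: (Isub HM Hbi); apply: setUS; apply/subsetP => x Hx.
      rewrite in_setD1 (subsetP HJZ _ Hx) andbT; apply/negP => /eqP Hxf.
      by move: HfJ; rewrite -Hxf Hx.
    have Hs : b |: J \subset B by rewrite subUset sub1set HbB HJB.
    have := mrank_max HbJI Hs; rewrite HJc cardsU1 HbJ /=; move=> H; clear -H; timeout 20 lia.
  have [_ HJc'] := (basesP HM J).1 HJbase.
  suff -> : B = J by [].
  apply/eqP; rewrite eqEsubset HJB andbT; apply/subsetP => b HbB.
  apply/negPn/negP => HbJ.
  have : b \in union_bases I by exact: (subsetP HBu).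
  case/bigcupP => Bb HBb HbBb.
  have Hb1 : [set b] \in I.
    apply: (Isub HM ((basesP HM Bb).1 HBb).1); by rewrite sub1set.
  case: (extend HM Hb1 HJI ltac:(rewrite cards1; timeout 20 lia)) => Z [HZI HbZ HZs HZc].
  have HbZ' : b \in Z by rewrite -sub1set.
  have HAJ : Z :\ b \subset J.
    apply/subsetP => x; rewrite !inE => /andP[Hxb HxZ].
    by move: (subsetP HZs _ HxZ); rewrite !inE (negbTE Hxb).
  have HAc : #|Z :\ b| = (rankM I).-1 by have := cardsD1 b Z; rewrite HbZ' /= => H; clear -H HZc HJc'; timeout 20 lia.
  have HAs : Z :\ b \in sM I.
    rewrite inE (Isub HM HZI (subD1set Z b)) /= HAc; apply/eqP; clear -Hr; timeout 20 lia.
  have : 0 < #|J :\: (Z :\ b)|.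
    rewrite cardsD; have := subset_leq_card (subsetIr J (Z :\ b)) => H; clear -H HAc HJc' Hr; timeout 20 lia.
  case/card_gt0P => j; rewrite inE => /andP[HjA HjJ].
  have Hjb : j |: (Z :\ b) \in bases I.
    apply/(basesP HM); split.
      by apply: (Isub HM HJI); rewrite subUset sub1set HjJ HAJ.
    rewrite cardsU1 HjA HAc /=; clear -Hr; timeout 20 lia.
  have Hbb : b |: (Z :\ b) \in bases I.
    by rewrite setD1K //; apply/(basesP HM); split => //; rewrite HZc.
  have := HD _ (imset_f _ HAs).
  have Hj : j \in B :&: KM I (Z :\ b) by rewrite inE (subsetP HJB _ HjJ) /=; exact/(KMP HM Hr _ HAs).
  have Hb : b \in B :&: KM I (Z :\ b) by rewrite inE HbB /=; exact/(KMP HM Hr _ HAs).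
  move/eqP/cards1P => [x Hx]; move: Hj Hb; rewrite Hx !inE => /eqP Hjx /eqP Hbx.
  by move: HbJ; rewrite Hbx -Hjx HjJ.
Qed.
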